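(* Let $\mathcal{X}=G^{\min}/P$ be the affine Grassmannian of the minimal affine Kac–Moody group $G^{\min}=\widehat{SL_2}$, with $P$ the standard maximal parabolic, and let $c^k_{n,m}\in\mathbb{Z}[\alpha_0,\alpha_1]$ be defined by $$\hat{\varepsilon}_n\cdot\hat{\varepsilon}_m=\sum_{k=\max\{n,m\}}^{n+m}c^k_{n,m}\,\hat{\varepsilon}_k\quad\text{in } H^\bullet_T(\mathcal{X}),$$ with $c^k_{n,m}=0$ for $k<\max\{n,m\}$ or $k>n+m$. Then for integers $1\le n\le m$ and $0\le i\le n$, $$c^{m+i}_{n,m}=\frac{1}{n!}\left[\frac{(m+i)!}{m!}\,Q^{n-i}_{m,i}-\sum_{k=\max\{i,1\}}^{n-1}k!\,Q^{n-k}_{1,k-1}\,c^{m+i}_{k,m}\right].$$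
   Context: $T$ is the adjoint torus of $\widehat{SL_2}$, and $H^\bullet_T(\mathrm{pt})$ is identified with the polynomial ring $\mathbb{Z}[\alpha_0,\alpha_1]$ in the simple roots (graded with $\alpha_0,\alpha_1$ in degree $1$); $c^k_{n,m}$ is homogeneous of degree $n+m-k$. $\{\hat{\varepsilon}_i\}_{i\ge0}$ is the $T$-equivariant Schubert basis of $H^\bullet_T(\mathcal{X})$ over $\mathbb{Z}[\alpha_0,\alpha_1]$ (Kumar's basis $\hat{\varepsilon}_{w_i}$), indexed by $w_i$, the alternating word of length $i$ in $s_0,s_1$ ending in $s_0$; $\hat\varepsilon_0=1$ and it satisfies the equivariant Chevalley formula $\hat{\varepsilon}_1\cdot\hat{\varepsilon}_m=q_m\hat{\varepsilon}_m+(m+1)\hat{\varepsilon}_{m+1}$, where $q_m:=\lceil m/2\rceil^2\alpha_0+(\lfloor m/2\rfloor^2+\lfloor m/2\rfloor)\alpha_1$. For $d\ge0$, $i\ge1$, $j\ge0$, $Q^d_{i,j}$ denotes the complete homogeneous symmetric polynomial of degree $d$ in $q_i,q_{i+1},\dots,q_{i+j}$, i.e. the sum of all monomials of degree $d$ in these $j+1$ variables ($Q^0_{i,j}=1$). *)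

(* Defs.v *)
From HB Require Import structures.
From mathcomp Require Import all_boot all_order all_algebra.
From mathcomp Require Import mpoly.
Set Implicit Arguments. Unset Strict Implicit. Unset Printing Implicit Defensive.
Import Order.TTheory GRing.Theory.
Local Open Scope ring_scope.

Notation HTpt := {mpoly int[2]}.
Definition alpha0 : HTpt := 'X_(0 : 'I_2).
Definition alpha1 : HTpt := 'X_(1 : 'I_2).

Definition qm (m : nat) : HTpt :=
  ((uphalf m) ^ 2)%N%:R * alpha0 + ((m./2) ^ 2 + m./2)%N%:R * alpha1.

Fixpoint hcomplete (d : nat) (s : seq HTpt) : HTpt :=
  match s with
  | [::] => (d == 0%N)%:R
  | x :: s' => \sum_(t < d.+1) x ^+ t * hcomplete (d - t) s'
  end.

(* Q^d_{i,j} = h_d(q_i, q_{i+1}, ..., q_{i+j}) *)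
Definition Qc (d i j : nat) : HTpt := hcomplete d [seq qm k | k <- iota i j.+1].

(* Main.v *)
Require Import Defs.
From HB Require Import structures.
From mathcomp Require Import all_boot all_order all_algebra.
From mathcomp Require Import mpoly.
From mathcomp Require Import ring zify.
Import GRing.Theory.
Set Implicit Arguments. Unset Strict Implicit.
Local Open Scope ring_scope.
Lemma hc0 s : hcomplete 0 s = 1.
Proof. by case: s => [|x s] //=; rewrite big_ord1 expr0 mul1r; elim: s => [|y s IH] //=; rewrite big_ord1 expr0 mul1r. Qed.
Lemma hcS d x s : hcomplete d.+1 (x :: s) = hcomplete d.+1 s + x * hcomplete d (x :: s).
Proof. rewrite /= big_ord_recl expr0 mul1r subn0; congr (_ + _).
rewrite mulr_sumr; apply: eq_bigr => t _. by rewrite /bump /= subSS exprS mulrA. Qed.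
Lemma hc_zero d s : hcomplete d (0 :: s) = hcomplete d s.
Proof. elim: d => [|d IH]; first by rewrite !hc0. by rewrite hcS mul0r addr0. Qed.
Lemma q0 : qm 0 = 0.
Proof. by rewrite /qm /= !mul0r addr0. Qed.
Lemma tz (m n j : nat) : (j <= n)%N -> ((m <= m + j <= m + n)%N = true) /\ ((m.+1 <= m + 0 <= m+n)%N = false).
Proof. move=> h; split; lia. Qed.
Definition f n m k : HTpt := if (m <= k <= m + n)%N then ((k ^_ (k - m))%:R * Qc (n - (k - m)) m (k - m)) else 0.

Lemma QcS d m j : Qc d m j = hcomplete d (qm m :: [seq qm k | k <- iota m.+1 j]).
Proof. by []. Qed.
Lemma Qc0 m j : Qc 0 m j = 1. Proof. exact: hc0. Qed.

Lemma fstep n m k : f n.+1 m k = qm m * f n m k + (m.+1)%:R * f n m.+1 k.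
Proof.
rewrite /f. have [hmk|hmk] : (m <= k)%N \/ (k < m)%N by lia.
2:{
  have -> : (m <= k <= m + n.+1)%N = false by apply/negbTE; lia.
  have -> : (m <= k <= m + n)%N = false by apply/negbTE; lia.
  have -> : (m.+1 <= k <= m.+1 + n)%N = false by apply/negbTE; lia.
  by rewrite !mulr0 addr0. }
have [j ->] : exists j, k = (m + j)%N by exists (k - m)%N; lia.
rewrite addKn.
case: j => [|j].
  have -> : (m <= m + 0 <= m + n.+1)%N = true by lia.
  have -> : (m <= m + 0 <= m + n)%N = true by lia.
  have -> : (m.+1 <= m + 0 <= m.+1 + n)%N = false by apply/negbTE; lia.
  rewrite !subn0 !QcS hcS (_ : hcomplete n.+1 _ = 0) // ffactn0 add0r mulr0 addr0. ring.
have -> : (m + j.+1 - m.+1 = j)%N by lia.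
case: (ltngtP j n) => hjn.
- have -> : (m <= m + j.+1 <= m + n.+1)%N = true by lia.
  have -> : (m <= m + j.+1 <= m + n)%N = true by lia.
  have -> : (m.+1 <= m + j.+1 <= m.+1 + n)%N = true by lia.
  have -> : (n.+1 - j.+1 = (n - j.+1).+1)%N by lia.
  have -> : (n - j = (n - j.+1).+1)%N by lia.
  rewrite ffactnSr.
  have -> : (m + j.+1 - j = m.+1)%N by lia.
  rewrite !(QcS _ m) hcS -/(Qc _ m.+1 j) natrM. ring.
- have -> : (m <= m + j.+1 <= m + n.+1)%N = false by apply/negbTE; lia.
  have -> : (m <= m + j.+1 <= m + n)%N = false by apply/negbTE; lia.
  have -> : (m.+1 <= m + j.+1 <= m.+1 + n)%N = false by apply/negbTE; lia.
  by rewrite !mulr0 addr0.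
- subst j.
  have -> : (m <= m + n.+1 <= m + n.+1)%N = true by lia.
  have -> : (m <= m + n.+1 <= m + n)%N = false by apply/negbTE; lia.
  have -> : (m.+1 <= m + n.+1 <= m.+1 + n)%N = true by lia.
  rewrite !subnn !Qc0 ffactnSr.
  have -> : (m + n.+1 - n = m.+1)%N by lia.
  rewrite natrM. ring.
Qed.

Definition Sm (A : lmodType HTpt) (e : nat -> A) N (a : nat -> HTpt) := \sum_(k < N) a k *: e k.
Arguments Sm {A}.

Lemma Sm_ext (A : lmodType HTpt) (e : nat -> A) N M a : (N <= M)%N ->
  (forall k, (N <= k < M)%N -> a k = 0) -> Sm e M a = Sm e N a.
Proof.
move=> hNM h; rewrite /Sm -!(big_mkord xpredT (fun k => a k *: e k)).
rewrite (big_cat_nat (leq0n N) hNM) /= [X in _ + X = _]big1_seq ?addr0 //.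
by move=> k /andP[_]; rewrite mem_index_iota => hk; rewrite h // scale0r.
Qed.

Lemma Sm_eq (A : lmodType HTpt) (e : nat -> A) N a b :
  (forall k, (k < N)%N -> a k = b k) -> Sm e N a = Sm e N b.
Proof. by move=> h; apply: eq_bigr => k _; rewrite h. Qed.

Lemma Sm_lin (A : lmodType HTpt) (e : nat -> A) N x y a b :
  x *: Sm e N a + y *: Sm e N b = Sm e N (fun k => x * a k + y * b k).
Proof. by rewrite /Sm !scaler_sumr -big_split /=; apply: eq_bigr => k _; rewrite !scalerA scalerDl. Qed.

Lemma pow_e (A : comAlgType HTpt) (e : nat -> A)
  (chevalley : forall m, e 1%N * e m = qm m *: e m + (m.+1)%:R *: e m.+1) n :
  forall m, e 1%N ^+ n * e m = Sm e (m + n).+1 (f n m).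
Proof.
elim: n => [|n IH] m.
  rewrite expr0 mul1r addn0 /Sm big_ord_recr /= big1 ?add0r.
    by rewrite /f leqnn addn0 leqnn subnn ffactn0 Qc0 mulr1 scale1r.
  by move=> k _; rewrite /f ifF ?scale0r //; apply/negbTE; have := ltn_ord k; lia.
rewrite exprS -mulrA mulrCA chevalley mulrDr -!scalerAr !IH.
rewrite -(@Sm_ext _ _ (m + n).+1 (m + n.+1).+1 (f n m)); last 2 first.
- lia.
- move=> k hk; rewrite /f ifF //; apply/negbTE; lia.
rewrite (_ : (m.+1 + n).+1 = (m + n.+1).+1); last by lia.
rewrite Sm_lin; apply: Sm_eq => k _; by rewrite fstep.
Qed.

Lemma Sm_uniq (A : lmodType HTpt) (e : nat -> A)
  (e_indep : forall (N : nat) (a : nat -> HTpt),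
      \sum_(k < N) a k *: e k = 0 -> forall k, (k < N)%N -> a k = 0) N a b :
  Sm e N a = Sm e N b -> forall k, (k < N)%N -> a k = b k.
Proof.
move=> h k hk; apply/eqP; rewrite -subr_eq0; apply/eqP.
apply: (e_indep N (fun k => a k - b k)) => //.
rewrite (eq_bigr (fun k : 'I_N => a k *: e k - b k *: e k)); last by move=> j _; rewrite scalerBl.
by rewrite sumrB -/(Sm e N a) h subrr.
Qed.

Lemma prod_e (A : comAlgType HTpt) (e : nat -> A) (c : nat -> nat -> nat -> HTpt)
  (c_def : forall n m,
      e n * e m = \sum_(maxn n m <= k < (n + m).+1) c k n m *: e k)
  (c_zero : forall k n m, (k < maxn n m)%N \/ (n + m < k)%N -> c k n m = 0) k m :
  e k * e m = Sm e (k + m).+1 (fun l => c l k m).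
Proof.
rewrite c_def /Sm -(big_mkord xpredT (fun l => c l k m *: e l)).
have h : (maxn k m <= (k + m).+1)%N by lia.
rewrite [RHS](big_cat_nat (leq0n _) h) /= [X in _ = X + _]big1_seq ?add0r //.
move=> l /andP[_]; rewrite mem_index_iota => hl; rewrite c_zero ?scale0r //; left; lia.
Qed.

Lemma f_n0_0 n : (1 <= n)%N -> f n 0 0 = 0.
Proof.
case: n => [|n] // _; rewrite /f /= subnn subn0 ffactn0 mul1r QcS hcS q0 mul0r addr0.
by [].
Qed.

Lemma f_n0_k n k : (1 <= k <= n)%N -> f n 0 k = k`!%:R * Qc (n - k) 1 (k - 1).
Proof.
move=> hk; rewrite /f ifT; last by lia.
rewrite subn0 ffactnn QcS q0 hc_zero /Qc.
by have -> : (k - 1).+1 = k by lia.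
Qed.

Unset Implicit Arguments. Set Strict Implicit.
Theorem proposition6p2
  (A : comAlgType HTpt) (e : nat -> A) (c : nat -> nat -> nat -> HTpt)
  (e_indep : forall (N : nat) (a : nat -> HTpt),
      \sum_(k < N) a k *: e k = 0 -> forall k, (k < N)%N -> a k = 0)
  (e_span : forall x : A, exists (N : nat) (a : nat -> HTpt),
      x = \sum_(k < N) a k *: e k)
  (e0 : e 0%N = 1)
  (chevalley : forall m, e 1%N * e m = qm m *: e m + (m.+1)%:R *: e m.+1)
  (c_def : forall n m,
      e n * e m = \sum_(maxn n m <= k < (n + m).+1) c k n m *: e k)
  (c_zero : forall k n m, (k < maxn n m)%N \/ (n + m < k)%N -> c k n m = 0)
  (n m i : nat) (h1n : (1 <= n)%N) (hnm : (n <= m)%N) (hin : (i <= n)%N) :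
  (n`!)%:R * c (m + i)%N n m =
    ((m + i)`! %/ m`!)%:R * Qc (n - i) m i
    - \sum_(maxn i 1 <= k < n) (k`!)%:R * Qc (n - k) 1 (k - 1) * c (m + i)%N k m.
Proof.
have P0 := pow_e chevalley n 0.
rewrite e0 mulr1 add0n in P0.
have Pm := pow_e chevalley n m.
have E : e 1%N ^+ n * e m =
   Sm e (m + n).+1 (fun l => \sum_(k < n.+1) f n 0 k * c l k m).
  rewrite P0 /Sm mulr_suml.
  rewrite (eq_bigr (fun k : 'I_n.+1 => f n 0 k *: Sm e (m + n).+1 (fun l => c l k m))); last first.
    move=> k _; rewrite -scalerAl (prod_e c_def c_zero).
    rewrite (@Sm_ext _ _ (k + m).+1 (m + n).+1) //.
      by have := ltn_ord k; lia.
    by move=> l hl; rewrite c_zero //; right; lia.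
  rewrite /Sm.
  under eq_bigr do rewrite scaler_sumr.
  rewrite exchange_big /=; apply: eq_bigr => l _.
  rewrite scaler_suml; apply: eq_bigr => k _; by rewrite scalerA.
have U := Sm_uniq e_indep (etrans (esym Pm) E) (k := (m + i)%N).
rewrite {1}/f addKn ifT in U; last by lia.
have {}U := U ltac:(lia).
have F : ((m + i)`! %/ m`! = (m + i) ^_ i)%N.
  by rewrite ffact_factd ?addnK //; lia.
rewrite F U -(big_mkord xpredT (fun k => f n 0 k * c (m + i)%N k m)) big_nat_recr //=.
rewrite big_ltn // f_n0_0 // mul0r add0r.
have h1 : (1 <= maxn i 1 <= n)%N by lia.
case/andP: h1 => h1 h2.
rewrite (big_cat_nat h1 h2) /= [\sum_(1 <= k < maxn i 1) _]big1_seq ?add0r; last first.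
  move=> k /andP[_]; rewrite mem_index_iota => hk; rewrite c_zero ?mulr0 //; right; lia.
rewrite (@eq_big_nat _ _ _ (maxn i 1) n _ (fun k => k`!%:R * Qc (n - k) 1 (k - 1) * c (m + i)%N k m)); last first.
  move=> k hk; rewrite f_n0_k //; lia.
rewrite f_n0_k; last by lia.
rewrite subnn Qc0 mulr1; ring.
Qed.
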